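(* Let $\sigma_0>0$, let $F$ be an $M\times N$ matrix, let $\mathcal{M}$ be a linear subspace of the space of $M\times N$ matrices, and let $(\alpha_n)$ satisfy $0<\alpha_n\le1$ for all $n$. Let $\Lambda^0=0$ and for $n\ge0$ $$X^{n+1}=\mathfrak{S}_{f_0}\Big(F-\frac{\Lambda^n}{2}\Big),\qquad \Lambda^{n+1}=\Lambda^n+\alpha_nP_{\mathcal{M}^\perp}(X^{n+1}).$$ Then the sequences $(X^n)_{n\ge1}$ and $(\Lambda^n)_{n\ge1}$ are bounded.
   Context: The space of $M\times N$ matrices carries the real inner product $\langle X,Y\rangle=\mathrm{Re}\,\mathrm{tr}(Y^*X)$ with Frobenius norm; $P_{\mathcal{M}^\perp}$ is the orthogonal projection onto $\mathcal{M}^\perp$. For $f:[0,\infty)\to\mathbb{C}$ and a matrix $A=U\Sigma_\phi V^*$ (singular value decomposition with singular values $\phi_j$), $\mathfrak{S}_f(A)=U\Sigma_{f(\phi)}V^*$ replaces each singular value $\phi_j$ by $f(\phi_j)$. Here $f_0(x)=0$ for $x<\sigma_0$ and $f_0(x)=x$ for $x\ge\sigma_0$. *)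

(* Defs.v *)
From HB Require Import structures.
From mathcomp Require Import all_boot all_order all_algebra.
From mathcomp Require Import complex.
From mathcomp Require Import reals.
Set Implicit Arguments. Unset Strict Implicit. Unset Printing Implicit Defensive.
Import Order.TTheory GRing.Theory Num.Theory.
Local Open Scope ring_scope.

Section Defs.
Variable R : realType.
Local Notation C := (R[i]).

Definition adjmx m n (A : 'M[C]_(m, n)) : 'M[C]_(n, m) :=
  (map_mx (@conjc R) A)^T.

Definition frob_inner m n (X Y : 'M[C]_(m, n)) : R :=
  complex.Re (\tr (adjmx Y *m X)).

Definition frob_norm m n (X : 'M[C]_(m, n)) : R := Num.sqrt (frob_inner X X).

Definition unitary_mx n (U : 'M[C]_n) : Prop :=
  U *m adjmx U = 1%:M /\ adjmx U *m U = 1%:M.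

Definition rdiag_mx m n (phi : nat -> R) : 'M[C]_(m, n) :=
  \matrix_(i < m, j < n) (if (i : nat) == (j : nat) then ((phi i)%:C)%C else 0).

Definition is_svd m n (A : 'M[C]_(m, n)) (U : 'M[C]_m) (V : 'M[C]_n)
  (phi : nat -> R) : Prop :=
  unitary_mx U /\ unitary_mx V /\
  (forall j, (j < minn m n)%N -> 0 <= phi j) /\
  A = U *m rdiag_mx m n phi *m adjmx V.

(* B = S_f(A): B = U Sigma_{f(phi)} V^* for some SVD A = U Sigma_phi V^*.
   (For f with f 0 = 0 this does not depend on the chosen SVD.) *)
Definition svd_fun_rel m n (f : R -> R) (A B : 'M[C]_(m, n)) : Prop :=
  exists U V phi, is_svd A U V phi /\ B = U *m rdiag_mx m n (f \o phi) *m adjmx V.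

Definition f0 (sigma0 : R) (x : R) : R := if x < sigma0 then 0 else x.

Definition real_subspace m n (S : 'M[C]_(m, n) -> Prop) : Prop :=
  S 0 /\ (forall X Y, S X -> S Y -> S (X + Y)) /\
  (forall (a : R) X, S X -> S ((a%:C)%C *: X)).

Definition orth_compl m n (S : 'M[C]_(m, n) -> Prop) (Y : 'M[C]_(m, n)) : Prop :=
  forall Z, S Z -> frob_inner Y Z = 0.

Definition is_orth_proj m n (T : 'M[C]_(m, n) -> Prop)
  (P : 'M[C]_(m, n) -> 'M[C]_(m, n)) : Prop :=
  forall X, T (P X) /\ (forall Z, T Z -> frob_inner (X - P X) Z = 0).

End Defs.

(* Main.v *)
Require Import Defs.
From HB Require Import structures.
From mathcomp Require Import all_boot all_order all_algebra.
From mathcomp Require Import complex.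
From mathcomp Require Import reals.
From mathcomp Require Import ring lra.
Import Order.TTheory GRing.Theory Num.Theory.
Local Open Scope ring_scope.
Set Implicit Arguments. Unset Strict Implicit.

Section Aux.
Variable R : realType.
Local Notation C := (R[i]).
Variables M N : nat.
Local Notation MX := ('M[C]_(M, N)).

Definition ent (x y : C) : R := complex.Re x * complex.Re y + complex.Im x * complex.Im y.
Definition ip (X Y : MX) : R := \sum_(p : 'I_M * 'I_N) ent (X p.1 p.2) (Y p.1 p.2).

Lemma Re_add (x y : C) : complex.Re (x + y) = complex.Re x + complex.Re y.
Proof. by case: x; case: y. Qed.

Lemma frobE (X Y : MX) : frob_inner X Y = ip X Y.
Proof.
rewrite /frob_inner /mxtrace /ip.
rewrite (big_morph (@complex.Re R) (id1 := 0) (op1 := +%R)) //; last first.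
  exact: Re_add.
rewrite -(pair_big xpredT xpredT (fun i j => ent (X i j) (Y i j))) /=.
rewrite [RHS](exchange_big).
apply: eq_bigr => j _; rewrite !mxE.
rewrite (big_morph (@complex.Re R) (id1 := 0) (op1 := +%R)) //; last first.
  exact: Re_add.
apply: eq_bigr => i _; rewrite /adjmx !mxE /ent.
case: (X i j) => a b; case: (Y i j) => c d /=. ring.
Qed.

Lemma ip_ge0 (X : MX) : 0 <= ip X X.
Proof.
apply: sumr_ge0 => p _; rewrite /ent; case: (X _ _) => a b /=.
by apply: addr_ge0; rewrite -expr2 sqr_ge0.
Qed.

Lemma ipDl (Y1 Y2 Z : MX) : ip (Y1 + Y2) Z = ip Y1 Z + ip Y2 Z.
Proof.
rewrite /ip -big_split; apply: eq_bigr => p _; rewrite !mxE /ent.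
case: (Y1 _ _) => a b; case: (Y2 _ _) => c d; case: (Z _ _) => e f /=; ring.
Qed.

Lemma ipZl (a : R) (Y Z : MX) : ip ((a%:C)%C *: Y) Z = a * ip Y Z.
Proof.
rewrite /ip mulr_sumr; apply: eq_bigr => p _; rewrite !mxE /ent.
case: (Y _ _) => c d; case: (Z _ _) => e f /=; ring.
Qed.

Lemma ip_sym (Y Z : MX) : ip Y Z = ip Z Y.
Proof.
rewrite /ip; apply: eq_bigr => p _; rewrite /ent; ring.
Qed.

Lemma ip_sub2 (F E : MX) : ip (F - E) (F - E) <= 2 * ip F F + 2 * ip E E.
Proof.
rewrite /ip !mulr_sumr -big_split; apply: ler_sum => p _; rewrite !mxE /ent.
case: (F _ _) => a b; case: (E _ _) => c d /=.
have h : 0 <= (a + c) ^+ 2 + (b + d) ^+ 2 by rewrite addr_ge0 // sqr_ge0.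
nra.
Qed.

Lemma ip_proj (W G : MX) : ip (W - G) G = 0 -> ip G G <= ip W W.
Proof.
move=> h0.
have e : ip (W - G) (W - G) = ip W W - ip G G - 2 * ip (W - G) G.
  rewrite /ip !mulr_sumr -!sumrB; apply: eq_bigr => p _; rewrite !mxE /ent.
  case: (W _ _) => a b; case: (G _ _) => c d /=; ring.
have := ip_ge0 (W - G); rewrite e h0; lra.
Qed.

Lemma ip_half (F L : MX) :
  ip (F - ((2^-1 : R)%:C)%C *: L) (F - ((2^-1 : R)%:C)%C *: L)
  <= 2 * ip F F + 2^-1 * ip L L.
Proof.
rewrite /ip !mulr_sumr -big_split; apply: ler_sum => p _; rewrite !mxE /ent.
case: (F _ _) => a b; case: (L _ _) => c d /=.
have h : 0 <= (a + c / 2) ^+ 2 + (b + d / 2) ^+ 2 by rewrite addr_ge0 // sqr_ge0.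
nra.
Qed.

Lemma ip_conv (a : R) (L G : MX) : 0 < a <= 1 ->
  ip (L + (a%:C)%C *: (G - ((2^-1 : R)%:C)%C *: L))
     (L + (a%:C)%C *: (G - ((2^-1 : R)%:C)%C *: L))
  <= (1 - a / 2) * ip L L + (a / 2) * (4 * ip G G).
Proof.
move=> /andP [a0 a1].
rewrite /ip !mulr_sumr -big_split; apply: ler_sum => p _; rewrite !mxE /ent.
case: (L _ _) => x y; case: (G _ _) => u v /=.
set t := 1 - a / 2.
have t0 : 0 <= t * (1 - t) by apply: mulr_ge0; rewrite /t; lra.
have h1 : 0 <= t * (1 - t) * ((x - 2 * u) ^+ 2 + (y - 2 * v) ^+ 2).
  by rewrite mulr_ge0 // addr_ge0 // sqr_ge0.
rewrite -subr_ge0; apply: (le_trans h1); rewrite le_eqVlt; apply/orP; left; apply/eqP.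
by rewrite /t; field.
Qed.


Lemma adjmxM m n k (A : 'M[C]_(m, n)) (B : 'M[C]_(n, k)) :
  adjmx (A *m B) = adjmx B *m adjmx A.
Proof. by rewrite /adjmx map_mxM trmx_mul. Qed.

Lemma adjmxK m n (A : 'M[C]_(m, n)) : adjmx (adjmx A) = A.
Proof. by apply/matrixP => i j; rewrite /adjmx !mxE conjcK. Qed.

Lemma frob_unitary (U : 'M[C]_M) (V : 'M[C]_N) (A B : MX) :
  adjmx U *m U = 1%:M -> adjmx V *m V = 1%:M ->
  frob_inner (U *m A *m adjmx V) (U *m B *m adjmx V) = frob_inner A B.
Proof.
move=> hU hV; rewrite /frob_inner !adjmxM adjmxK.
have -> : V *m (adjmx B *m adjmx U) *m (U *m A *m adjmx V)
          = V *m (adjmx B *m A *m adjmx V).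
  by rewrite !mulmxA -(mulmxA (V *m adjmx B) (adjmx U) U) hU mulmx1.
by rewrite mxtrace_mulC -(mulmxA (adjmx B *m A)) hV mulmx1.
Qed.

Lemma ip_unitary (U : 'M[C]_M) (V : 'M[C]_N) (A B : MX) :
  adjmx U *m U = 1%:M -> adjmx V *m V = 1%:M ->
  ip (U *m A *m adjmx V) (U *m B *m adjmx V) = ip A B.
Proof. by move=> hU hV; rewrite -!frobE frob_unitary. Qed.

Lemma ip_rdiag_f0 (s : R) (phi : nat -> R) :
  ip (rdiag_mx M N (f0 s \o phi)) (rdiag_mx M N (f0 s \o phi))
  <= ip (rdiag_mx M N phi) (rdiag_mx M N phi).
Proof.
apply: ler_sum => p _; rewrite !mxE /ent; case: ifP => _ /=; last by [].
rewrite /f0; case: ifP => _ /=; last by [].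
by rewrite !mul0r !addr0 -expr2 sqr_ge0.
Qed.

Lemma ip_rdiag_E (s : R) (phi : nat -> R) :
  (forall j, (j < minn M N)%N -> 0 <= phi j) ->
  ip (rdiag_mx M N phi - rdiag_mx M N (f0 s \o phi))
     (rdiag_mx M N phi - rdiag_mx M N (f0 s \o phi))
  <= \sum_(p : 'I_M * 'I_N) s ^+ 2.
Proof.
move=> hphi; apply: ler_sum => [[i j]] _; rewrite !mxE /ent /=.
case: ifP => hij /=; last first.
  by rewrite subr0 mul0r addr0 sqr_ge0.
have hi : (i < minn M N)%N.
  by rewrite leq_min ltn_ord (eqP hij) ltn_ord.
have := hphi _ hi.
rewrite /f0; case: ifP => h /=.
  rewrite !subr0 => h0; rewrite mul0r addr0; nra.
by rewrite !subrr mul0r addr0 sqr_ge0.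
Qed.

End Aux.

Unset Implicit Arguments. Set Strict Implicit.

Theorem proposition5 (R : realType) (M N : nat) (sigma0 : R)
  (F : 'M[R[i]]_(M, N)) (Msub : 'M[R[i]]_(M, N) -> Prop)
  (Pperp : 'M[R[i]]_(M, N) -> 'M[R[i]]_(M, N)) (alpha : nat -> R)
  (X Lam : nat -> 'M[R[i]]_(M, N)) :
  0 < sigma0 ->
  real_subspace Msub ->
  is_orth_proj (orth_compl Msub) Pperp ->
  (forall n, 0 < alpha n <= 1) ->
  Lam 0%N = 0 ->
  (forall n : nat, svd_fun_rel (f0 sigma0) (F - (2^-1 : R[i]) *: Lam n) (X n.+1)) ->
  (forall n : nat, Lam n.+1 = Lam n + ((alpha n)%:C)%C *: Pperp (X n.+1)) ->
  exists B : R, forall n : nat, (1 <= n)%N ->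
    frob_norm (X n) <= B /\ frob_norm (Lam n) <= B.
Proof.
move=> s0 hsub hP halpha hL0 hsvd hLam.
pose T := orth_compl Msub.
have TD : forall Y1 Y2, T Y1 -> T Y2 -> T (Y1 + Y2).
  move=> Y1 Y2 h1 h2 Z hZ; rewrite frobE ipDl -!frobE h1 // h2 // addr0 //.
have TZ : forall (a : R) Y, T Y -> T ((a%:C)%C *: Y).
  move=> a Y h Z hZ; rewrite frobE ipZl -frobE h // mulr0 //.
have h2 : (2^-1 : R[i]) = ((2^-1 : R)%:C)%C by rewrite fmorphV rmorph_nat.
pose cE := \sum_(p : 'I_M * 'I_N) sigma0 ^+ 2.
pose K0 := 2 * ip F F + 2 * cE.
pose K1 := 4 * K0.
have cE0 : 0 <= cE by apply: sumr_ge0 => p _; rewrite sqr_ge0.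
have FF0 := ip_ge0 F.
have step : forall n, T (Lam n) -> ip (Lam n) (Lam n) <= K1 ->
   [/\ T (Lam n.+1), ip (Lam n.+1) (Lam n.+1) <= K1 &
       ip (X n.+1) (X n.+1) <= 2 * ip F F + 2^-1 * K1].
  move=> n TL hL.
  have [U [V [phi [[[hU1 hU2] [[hV1 hV2] [hphi hY]]] hX]]]] := hsvd n.
  rewrite h2 in hY.
  have hXX : ip (X n.+1) (X n.+1) <= ip (F - ((2^-1 : R)%:C)%C *: Lam n) (F - ((2^-1 : R)%:C)%C *: Lam n).
    by rewrite hX hY !ip_unitary //; exact: ip_rdiag_f0.
  pose E := (F - ((2^-1 : R)%:C)%C *: Lam n) - X n.+1.
  have hE : ip E E <= cE.
    by rewrite /E hX hY -mulmxBl -mulmxBr ip_unitary //; exact: ip_rdiag_E.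
  have [TQ hQ] := hP (X n.+1).
  pose G := Pperp (X n.+1) + ((2^-1 : R)%:C)%C *: Lam n.
  have TG : T G by apply: TD => //; apply: TZ.
  have eWG : X n.+1 - Pperp (X n.+1) = (F - E) - G.
    by apply/matrixP => i j; rewrite /E /G !mxE; ring.
  have hG : ip G G <= ip (F - E) (F - E).
    by apply: ip_proj; rewrite -eWG -frobE; exact: (hQ G TG).
  have hW := ip_sub2 F E.
  have eL : Lam n.+1 = Lam n + ((alpha n)%:C)%C *: (G - ((2^-1 : R)%:C)%C *: Lam n).
    by rewrite hLam /G addrK.
  split.
  - by rewrite hLam; apply: TD => //; apply: TZ.
  - rewrite eL; apply: le_trans (ip_conv _ _ (halpha n)) _.
    have /andP [a0 a1] := halpha n.
    have e1 : 0 <= (1 - alpha n / 2) * (K1 - ip (Lam n) (Lam n)).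
      by apply: mulr_ge0; lra.
    have e2 : 0 <= (alpha n / 2) * (K0 - ip G G).
      by apply: mulr_ge0; rewrite /K0; lra.
    rewrite /K1; rewrite /K1 in e1; lra.
  - apply: le_trans hXX _; apply: le_trans (ip_half F (Lam n)) _; lra.
have inv : forall n, T (Lam n) /\ ip (Lam n) (Lam n) <= K1.
  elim=> [|n [TL hL]].
    have ip0 : forall Z : 'M[R[i]]_(M, N), ip 0 Z = 0.
      by move=> Z; apply: big1 => p _; rewrite mxE /ent /= !mul0r addr0.
    rewrite hL0; split; first by move=> Z _; rewrite frobE ip0.
    by rewrite ip0 /K1 /K0; lra.
  by have [] := step n TL hL.
exists (Num.sqrt (K1 + (2 * ip F F + 2^-1 * K1))).
case=> [|m] // _.
have [TL hL] := inv m.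
have [_ hL' hX'] := step m TL hL.
have K10 : 0 <= K1 by rewrite /K1 /K0; lra.
rewrite /frob_norm !frobE !ler_sqrt; try lra.
Qed.
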